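(* Let $G_1,G_2,\dots$ be probability generating functions of nonnegative integer-valued random variables with $\rho_i=G_i'(1)\in(0,1)$ and $G_i''(1)<\infty$, such that $\lim_{n}\rho_n=1$, $\sum_{n=1}^\infty(1-\rho_n)=\infty$, and $\lim_n G_n''(1)/(1-\rho_n)=0$. With $\rho_{[j,n]}=\rho_{j+1}\cdots\rho_n$, $\vartheta_{i,n}=\big(1-G_i(1-\rho_{[i,n]})\big)/\rho_{[i,n]}$ and $\vartheta_{[j,n]}=\vartheta_{j+1,n}\cdots\vartheta_{n,n}$ (empty products $=1$), one has $$\lim_{n\to\infty}\sum_{j=1}^n(1-\rho_j)\vartheta_{[j,n]}=1.$$ *)

(* Defs.v *)
From Stdlib Require Import Reals.
Open Scope R_scope.

(* prod_range f j n = f (j+1) * ... * f n  (empty product = 1 when n <= j). *)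
Fixpoint prod_range (f : nat -> R) (j n : nat) : R :=
  match n with
  | O => 1
  | S m => if Nat.leb (S m) j then 1 else prod_range f j m * f (S m)
  end.

Fixpoint sum1 (f : nat -> R) (n : nat) : R :=
  match n with
  | O => 0
  | S m => sum1 f m + f (S m)
  end.

Definition is_pgf (p : nat -> R) (G : R -> R) : Prop :=
  (forall k, 0 <= p k) /\ infinite_sum p 1 /\
  (forall s, 0 <= s <= 1 -> infinite_sum (fun k => p k * s ^ k) (G s)).

(* G'(1) = sum_k k p_k (the left derivative at 1 = first factorial moment). *)
Definition pgf_d1 (p : nat -> R) (d : R) : Prop :=
  infinite_sum (fun k => INR k * p k) d.

(* G''(1) = sum_k k(k-1) p_k, finite (second factorial moment). *)
Definition pgf_d2 (p : nat -> R) (d : R) : Prop :=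
  infinite_sum (fun k => INR k * (INR k - 1) * p k) d.

Definition rho_int (rho : nat -> R) (j n : nat) : R := prod_range rho j n.

Definition theta (G : nat -> R -> R) (rho : nat -> R) (i n : nat) : R :=
  (1 - G i (1 - rho_int rho i n)) / rho_int rho i n.

Definition theta_int (G : nat -> R -> R) (rho : nat -> R) (j n : nat) : R :=
  prod_range (fun i => theta G rho i n) j n.

(* Main.v *)
Require Import Defs.
From Stdlib Require Import Reals Lra Lia Arith.
Open Scope R_scope.

Lemma cv_cst (c : R) : Un_cv (fun _ => c) c.
Proof. intros e He. exists 0%nat. intros. unfold Rdist. rewrite Rminus_diag, Rabs_R0. lra. Qed.

Lemma cv_ext (A B : nat -> R) l : (forall n, A n = B n) -> Un_cv A l -> Un_cv B l.
Proof. intros H HA e He. destruct (HA e He) as [N HN]. exists N. intros. rewrite <- H. auto. Qed.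

Lemma ser_lin (a b : nat -> R) la lb u v :
  infinite_sum a la -> infinite_sum b lb ->
  infinite_sum (fun k => u * a k + v * b k) (u * la + v * lb).
Proof.
  intros Ha Hb.
  change (Un_cv (fun n => sum_f_R0 (fun k => u * a k + v * b k) n) (u * la + v * lb)).
  apply cv_ext with (A := fun n => u * sum_f_R0 a n + v * sum_f_R0 b n).
  - intro n. rewrite plus_sum, !scal_sum. f_equal; apply sum_eq; intros; ring.
  - apply CV_plus; apply CV_mult; try apply cv_cst; assumption.
Qed.

Lemma ser_le (a b : nat -> R) la lb :
  (forall k, a k <= b k) -> infinite_sum a la -> infinite_sum b lb -> la <= lb.
Proof.
  intros H Ha Hb. apply (Rle_cv_lim (Un := fun n => sum_f_R0 a n) (Vn := fun n => sum_f_R0 b n)); auto.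
  intro n. apply sum_Rle. auto.
Qed.

Lemma bern (x : R) (k : nat) : 0 <= x <= 1 -> 1 - INR k * x <= (1 - x) ^ k /\ (1-x)^k <= 1 /\ 0 <= (1-x)^k.
Proof.
  intros Hx. induction k as [|k IH].
  - simpl. lra.
  - rewrite S_INR. simpl. destruct IH as [I1 [I2 I3]].
    assert (0 <= INR k) by apply pos_INR.
    split; [|split]; nra.
Qed.

Lemma term_up (pk x : R) (k : nat) : 0 <= pk -> 0 <= x <= 1 ->
  1 * pk + -1 * (pk * (1 - x) ^ k) <= x * (INR k * pk) + 0 * pk.
Proof. intros Hp Hx. destruct (bern x k Hx) as [B1 _]. nra. Qed.

Lemma term_lo (pk x : R) (k : nat) : 0 <= pk -> 0 <= x <= 1 ->
  x * (INR k * pk) + - x * (INR k * (INR k - 1) * pk) <= 1 * pk + -1 * (pk * (1 - x) ^ k).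
Proof.
  intros Hp Hx. destruct (bern x k Hx) as [_ [B2 B3]].
  destruct k as [|[|k]].
  - simpl. lra.
  - simpl. nra.
  - rewrite !S_INR. assert (0 <= INR k) by apply pos_INR. assert (0 <= x * pk * INR k * (INR k + 2)) by (apply Rmult_le_pos; [apply Rmult_le_pos; [apply Rmult_le_pos|]|]; lra). nra.
Qed.

Lemma term_0 (pk x : R) (k : nat) : 0 <= pk -> 0 <= x <= 1 ->
  0 * pk + 0 * pk <= 1 * pk + -1 * (pk * (1 - x) ^ k).
Proof. intros Hp Hx. destruct (bern x k Hx) as [_ [B2 B3]]. nra. Qed.

Lemma G_bounds p G r m x :
  is_pgf p G -> pgf_d1 p r -> pgf_d2 p m -> 0 <= x <= 1 ->
  0 <= 1 - G (1 - x) /\ 1 - G (1 - x) <= x * r /\ x * (r - m) <= 1 - G (1 - x).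
Proof.
  intros [Hp [H1 HG]] Hr Hm Hx.
  assert (HS := ser_lin _ _ _ _ 1 (-1) H1 (HG (1 - x) ltac:(lra))).
  simpl in HS.
  split; [|split].
  - pose proof (ser_le _ _ _ _ (fun k => term_0 (p k) x k (Hp k) Hx) (ser_lin _ _ _ _ 0 0 H1 H1) HS). lra.
  - pose proof (ser_le _ _ _ _ (fun k => term_up (p k) x k (Hp k) Hx) HS (ser_lin _ _ _ _ x 0 Hr H1)). lra.
  - pose proof (ser_le _ _ _ _ (fun k => term_lo (p k) x k (Hp k) Hx) (ser_lin _ _ _ _ x (-x) Hr Hm) HS). lra.
Qed.

Lemma pr_one f j n : (n <= j)%nat -> prod_range f j n = 1.
Proof. destruct n; [reflexivity|]. intro H. change (prod_range f j (S n)) with (if Nat.leb (S n) j then 1 else prod_range f j n * f (S n)). apply Nat.leb_le in H. now rewrite H. Qed.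

Lemma pr_S f j n : (j < S n)%nat -> prod_range f j (S n) = prod_range f j n * f (S n).
Proof. intro H. change (prod_range f j (S n)) with (if Nat.leb (S n) j then 1 else prod_range f j n * f (S n)). replace (Nat.leb (S n) j) with false; auto. symmetry. apply Nat.leb_gt. lia. Qed.

Lemma pr_step f j n : (j < n)%nat -> prod_range f j n = f (S j) * prod_range f (S j) n.
Proof.
  induction n as [|m IH]; intro H; [lia|].
  rewrite pr_S by lia.
  destruct (Nat.eq_dec j m) as [->|Hne].
  - rewrite (pr_one f (S m) (S m)) by lia. rewrite pr_one by lia. ring.
  - rewrite IH by lia. rewrite (pr_S f (S j)) by lia. ring.
Qed.

Lemma pr_mono f g j n : (forall i, (j < i <= n)%nat -> 0 <= f i <= g i) ->
  0 <= prod_range f j n <= prod_range g j n.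
Proof.
  induction n as [|m IH]; intro H; [simpl; lra|].
  destruct (le_lt_dec (S m) j).
  - rewrite !pr_one by lia. lra.
  - rewrite !pr_S by lia. destruct IH as [I1 I2]. intros; apply H; lia.
    destruct (H (S m)) as [H1 H2]; [lia|]. split; [apply Rmult_le_pos; lra|].
    apply Rmult_le_compat; lra.
Qed.

Lemma pr_pos f j n : (forall i, (j < i <= n)%nat -> 0 < f i) -> 0 < prod_range f j n.
Proof.
  induction n as [|m IH]; intro H; [simpl; lra|].
  destruct (le_lt_dec (S m) j).
  - rewrite !pr_one by lia. lra.
  - rewrite !pr_S by lia. apply Rmult_lt_0_compat. apply IH; intros; apply H; lia. apply H; lia.
Qed.

Lemma pr_cst1 j n : prod_range (fun _ => 1) j n = 1.
Proof. induction n; [reflexivity|]. destruct (le_lt_dec (S n) j). now rewrite pr_one. rewrite pr_S by lia. rewrite IHn. ring. Qed.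

Lemma pr_le1 f j n : (forall i, (j < i <= n)%nat -> 0 <= f i <= 1) -> prod_range f j n <= 1.
Proof. intro H. rewrite <- (pr_cst1 j n). apply pr_mono. auto. Qed.

Lemma pr_exp (rho : nat -> R) N : (forall i, (N < i)%nat -> 0 < rho i) ->
  forall d, prod_range rho N (N + d) <= exp (sum1 (fun n => 1 - rho n) N - sum1 (fun n => 1 - rho n) (N + d)).
Proof.
  intros H d. induction d as [|d IH].
  - rewrite Nat.add_0_r, pr_one by lia. rewrite Rminus_diag, exp_0. lra.
  - replace (N + S d)%nat with (S (N + d)) by lia. rewrite pr_S by lia. simpl sum1.
    replace (sum1 (fun n => 1 - rho n) N - (sum1 (fun n => 1 - rho n) (N + d) + (1 - rho (S (N + d)))))
      with ((sum1 (fun n => 1 - rho n) N - sum1 (fun n => 1 - rho n) (N + d)) + (- (1 - rho (S (N+d))))) by ring.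
    rewrite exp_plus.
    assert (0 < rho (S (N + d))) by (apply H; lia).
    pose proof (exp_ineq1_le (- (1 - rho (S (N + d))))).
    assert (0 <= prod_range rho N (N + d)).
    { apply pr_mono with (g := rho). intros; split; [apply Rlt_le; apply H; lia| lra]. }
    apply Rmult_le_compat; lra.
Qed.

Lemma sum1_le a b n : (forall j, (1 <= j <= n)%nat -> a j <= b j) -> sum1 a n <= sum1 b n.
Proof.
  induction n; intro H; simpl; [lra|]. apply Rplus_le_compat. apply IHn; intros; apply H; lia. apply H; lia.
Qed.

Lemma sum1_scal c a n : c * sum1 a n = sum1 (fun j => c * a j) n.
Proof. induction n; simpl; [ring|]. rewrite <- IHn. ring. Qed.

Definition tel (f : nat -> R) (N n j : nat) : R :=
  if Nat.leb j N then 0 else (1 - f j) * prod_range f j n.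

Lemma tel_zero f N n k : (k <= N)%nat -> sum1 (tel f N n) k = 0.
Proof.
  induction k; intro H; simpl; auto. rewrite IHk by lia. unfold tel.
  replace (Nat.leb (S k) N) with true. ring. symmetry; apply Nat.leb_le; lia.
Qed.

Lemma tel_sum f N n d : (N + d <= n)%nat ->
  sum1 (tel f N n) (N + d) = prod_range f (N + d) n - prod_range f N n.
Proof.
  induction d as [|d IH]; intro H.
  - rewrite Nat.add_0_r, tel_zero by lia. ring.
  - replace (N + S d)%nat with (S (N + d)) by lia. simpl. rewrite IH by lia.
    unfold tel. replace (Nat.leb (S (N + d)) N) with false by (symmetry; apply Nat.leb_gt; lia).
    rewrite (pr_step f (N + d) n) by lia. ring.
Qed.

Lemma tel_full f N n : (N <= n)%nat -> sum1 (tel f N n) n = 1 - prod_range f N n.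
Proof.
  intro H. assert (E := tel_sum f N n (n - N) ltac:(lia)).
  replace (N + (n - N))%nat with n in E by lia. rewrite E, pr_one by lia. ring.
Qed.

Lemma theta_bd (p : nat -> nat -> R) (G : nat -> R -> R) (rho m2 : nat -> R)
  (Hpgf : forall i, (1 <= i)%nat -> is_pgf (p i) (G i))
  (Hd1 : forall i, (1 <= i)%nat -> pgf_d1 (p i) (rho i))
  (Hrho : forall i, (1 <= i)%nat -> 0 < rho i < 1)
  (Hd2 : forall i, (1 <= i)%nat -> pgf_d2 (p i) (m2 i)) i n :
  (1 <= i)%nat ->
  0 <= theta G rho i n <= rho i /\ rho i - m2 i <= theta G rho i n.
Proof.
  intros Hi. unfold theta. set (x := rho_int rho i n).
  assert (Hx0 : 0 < x).
  { apply pr_pos. intros k Hk. apply Hrho. lia. }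
  assert (Hx1 : x <= 1).
  { apply pr_le1. intros k Hk. destruct (Hrho k ltac:(lia)). lra. }
  destruct (G_bounds _ _ _ _ x (Hpgf i Hi) (Hd1 i Hi) (Hd2 i Hi) ltac:(lra)) as [B0 [B1 B2]].
  set (y := 1 - G i (1 - x)) in *.
  assert (E : y / x * x = y) by (field; lra).
  assert (0 <= y / x) by (unfold Rdiv; apply Rmult_le_pos; [lra| apply Rlt_le, Rinv_0_lt_compat; lra]).
  split; [split|]; auto; nra.
Qed.

Theorem mainTheorem8
  (p : nat -> nat -> R) (G : nat -> R -> R) (rho m2 : nat -> R)
  (Hpgf : forall i, (1 <= i)%nat -> is_pgf (p i) (G i))
  (Hd1 : forall i, (1 <= i)%nat -> pgf_d1 (p i) (rho i))
  (Hrho : forall i, (1 <= i)%nat -> 0 < rho i < 1)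
  (Hd2 : forall i, (1 <= i)%nat -> pgf_d2 (p i) (m2 i))
  (Hlim : Un_cv rho 1)
  (Hdiv : cv_infty (sum1 (fun n => 1 - rho n)))
  (Hratio : Un_cv (fun n => m2 n / (1 - rho n)) 0) :
  Un_cv (fun n => sum1 (fun j => (1 - rho j) * theta_int G rho j n) n) 1.
Proof.
  intros eps He.
  set (d := eps / 2).
  assert (Hd : 0 < d) by (unfold d; lra).
  destruct (Hlim (/ (1 + d)) ltac:(apply Rlt_gt, Rinv_0_lt_compat; lra)) as [N1 HN1].
  destruct (Hratio d ltac:(lra)) as [N2 HN2].
  set (N := (1 + N1 + N2)%nat).
  set (r := fun i => 1 - (1 + d) * (1 - rho i)).
  assert (Hr : forall i, (N < i)%nat -> 0 <= r i <= rho i - m2 i /\ r i <= rho i).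
  { intros i Hi. destruct (Hrho i ltac:(unfold N in Hi; lia)) as [R1 R2].
    assert (A1 := HN1 i ltac:(unfold N in Hi; lia)). unfold Rdist in A1.
    assert (A2 := HN2 i ltac:(unfold N in Hi; lia)). unfold Rdist in A2.
    apply Rabs_def2 in A1. apply Rabs_def2 in A2.
    assert (E1 : (1 + d) * / (1 + d) = 1) by (field; lra).
    assert (E2 : m2 i / (1 - rho i) * (1 - rho i) = m2 i) by (field; lra).
    unfold r. split; [split|]; nra. }
  set (S := sum1 (fun n => 1 - rho n)).
  destruct (Hdiv (S N - ln (eps / 4))) as [N3 HN3].
  exists (N + N3)%nat. intros n Hn.
  set (g := fun j => (1 - rho j) * theta_int G rho j n).
  assert (Hth := theta_bd p G rho m2 Hpgf Hd1 Hrho Hd2).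
  assert (Hg0 : forall j, (1 <= j)%nat -> 0 <= g j).
  { intros j Hj. unfold g. destruct (Hrho j Hj).
    apply Rmult_le_pos; [lra|]. unfold theta_int.
    apply (pr_mono _ (fun i => theta G rho i n)). intros i Hi.
    destruct (Hth i n ltac:(lia)) as [[T0 _] _]. lra. }
  assert (Up : sum1 g n <= 1).
  { apply Rle_trans with (sum1 (tel rho 0 n) n).
    - apply sum1_le. intros j Hj. unfold tel, g.
      replace (Nat.leb j 0) with false by (symmetry; apply Nat.leb_gt; lia).
      destruct (Hrho j ltac:(lia)). apply Rmult_le_compat_l; [lra|].
      unfold theta_int. apply pr_mono. intros i Hi.
      destruct (Hth i n ltac:(lia)) as [[T0 T1] _]. lra.
    - rewrite tel_full by lia.
      assert (0 <= prod_range rho 0 n).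
      { apply (pr_mono _ rho). intros i Hi. destruct (Hrho i ltac:(lia)). lra. }
      lra. }
  assert (Pe : prod_range rho N n < eps / 4).
  { assert (E := pr_exp rho N ltac:(intros; apply Hrho; unfold N in *; lia) (n - N)).
    replace (N + (n - N))%nat with n in E by lia.
    assert (HS := HN3 n ltac:(lia)). fold S in E, HS.
    eapply Rle_lt_trans; [exact E|].
    rewrite <- (exp_ln (eps / 4)) by lra. apply exp_increasing. lra. }
  assert (Lo : 1 - prod_range rho N n <= (1 + d) * sum1 g n).
  { rewrite sum1_scal. rewrite <- tel_full by lia.
    apply Rle_trans with (sum1 (tel r N n) n).
    - rewrite !tel_full by lia.
      assert (prod_range r N n <= prod_range rho N n).
      { apply pr_mono. intros i Hi. destruct (Hr i ltac:(lia)) as [[? ?] ?]. lra. }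
      lra.
    - apply sum1_le. intros j Hj. unfold tel.
      destruct (Nat.leb j N) eqn:Ej.
      + assert (0 <= g j) by (apply Hg0; lia). nra.
      + apply Nat.leb_gt in Ej. unfold g.
        replace (1 - r j) with ((1 + d) * (1 - rho j)) by (unfold r; ring).
        destruct (Hrho j ltac:(lia)).
        rewrite Rmult_assoc. apply Rmult_le_compat_l; [lra|].
        apply Rmult_le_compat_l; [lra|].
        unfold theta_int. apply pr_mono. intros i Hi.
        destruct (Hr i ltac:(lia)) as [[R0 R1] _].
        destruct (Hth i n ltac:(lia)) as [_ T2]. lra. }
  unfold Rdist. fold g. apply Rabs_def1; [lra|].
  unfold d in Lo.
  destruct (Rle_or_lt (sum1 g n) (1 - eps)) as [Hc|Hc]; [|lra].
  exfalso. assert ((1 + eps/2) * sum1 g n <= (1 + eps/2) * (1 - eps)) by (apply Rmult_le_compat_l; lra).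
  nra.
Qed.
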